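(* Let $\mathcal{I}$ be an interpreted system, $\mathit{Prop}$ a set of atomic propositions, $S$ and $T$ indexical sets of agents in $\mathcal{I}$, and $\approx$ a synchronous epistemic bisimulation on $\mathcal{I}$ with respect to $\mathit{Prop}$ such that (a) $S\subseteq T$ is valid in $\mathcal{I}$, and (b) for every point $(r,m)$ of $\mathcal{I}$ there exists a point $(r',m)$ with $(r,m)\approx(r',m)$ and $S(r',m)=T(r,m)$. Then for every $p\in\mathit{Prop}$ and every agent $i$, the formula $B^S_i\,CB_S\,p\Leftrightarrow B^T_i\,CB_T\,p$ is valid in $\mathcal{I}$.
   Context: Agents $\mathrm{Agt}=\{1,\dots,n\}$. An interpreted system $\mathcal{I}=(\mathcal{R},\pi)$ consists of a set of runs (functions from times $\mathbb{N}$ to global states $(s_e,s_1,\dots,s_n)$) and an interpretation $\pi$ giving the atomic propositions true at each point $(r,m)$; $r_i(m)$ is agent $i$'s local state; $(r,m)\sim_i(r',m')$ iff $r_i(m)=r'_i(m')$; $K_i\phi$ holds at $(r,m)$ iff $\phi$ holds at all $(r',m')\sim_i(r,m)$. An indexical set $S$ assigns $S(r,m)\subseteq\mathrm{Agt}$ to each point; $i\in S$ holds at $(r,m)$ iff $i\in S(r,m)$; $S\subseteq T$ is valid if $S(r,m)\subseteq T(r,m)$ at every point. $B^S_i\phi:=K_i(i\in S\Rightarrow\phi)$; $E^B_S\phi:=\bigwedge_{i\in S}B^S_i\phi$ (over $i\in S(r,m)$ at the point of evaluation); $CB_S\phi:=\bigwedge_{k\ge1}(E^B_S)^k\phi$.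 A synchronous epistemic bisimulation on $\mathcal{I}$ with respect to $\mathit{Prop}$ is a relation $\approx$ on points such that whenever $(r,m)\approx(r',m')$: $m=m'$; for all $p\in\mathit{Prop}$, $p$ holds at $(r,m)$ iff it holds at $(r',m)$; and $(r,m)\sim_i(r',m)$ for every agent $i$. A formula is valid in $\mathcal{I}$ if it holds at every point. *)

(* Defs.v *)
From mathcomp Require Import all_boot.
Set Implicit Arguments. Unset Strict Implicit. Unset Printing Implicit Defensive.

Record interp_system (n : nat) := IS {
  Le : Type;
  L : 'I_n -> Type;
  Atom : Type;
  runs : (nat -> Le * (forall i : 'I_n, L i)) -> Prop;
  pi : (nat -> Le * (forall i : 'I_n, L i)) -> nat -> Atom -> Prop
}.

Section Semantics.
Variables (n : nat) (I : interp_system n).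

Definition run := nat -> Le I * (forall i : 'I_n, L I i).

Definition local (i : 'I_n) (r : run) (m : nat) : L I i := (r m).2 i.

Definition indist (i : 'I_n) (r : run) (m : nat) (r' : run) (m' : nat) : Prop :=
  local i r m = local i r' m'.

Definition formula := run -> nat -> Prop.

Definition atom (p : Atom I) : formula := fun r m => @pi _ I r m p.

Definition K (i : 'I_n) (phi : formula) : formula :=
  fun r m => forall r' m', @runs _ I r' -> indist i r m r' m' -> phi r' m'.

Definition indexical := run -> nat -> 'I_n -> Prop.

Definition inS (S : indexical) (i : 'I_n) : formula := fun r m => S r m i.

Definition impl (phi psi : formula) : formula := fun r m => phi r m -> psi r m.
Definition iff_f (phi psi : formula) : formula := fun r m => phi r m <-> psi r m.

Definition B (S : indexical) (i : 'I_n) (phi : formula) : formula :=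
  K i (impl (inS S i) phi).

Definition EB (S : indexical) (phi : formula) : formula :=
  fun r m => forall i, S r m i -> B S i phi r m.

Definition CB (S : indexical) (phi : formula) : formula :=
  fun r m => forall k, 1 <= k -> iter k (EB S) phi r m.

Definition valid (phi : formula) : Prop := forall r m, @runs _ I r -> phi r m.

Definition valid_subset (S T : indexical) : Prop :=
  forall r m, @runs _ I r -> forall i, S r m i -> T r m i.

Definition sync_epi_bisim (Props : Atom I -> Prop)
    (bis : run -> nat -> run -> nat -> Prop) : Prop :=
  forall r m r' m', @runs _ I r -> @runs _ I r' -> bis r m r' m' ->
    [/\ m = m',
        (forall p, Props p -> (@pi _ I r m p <-> @pi _ I r' m p)) &
        (forall i, indist i r m r' m)].

End Semantics.

(* Main.v *)
Require Import Defs.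
From mathcomp Require Import all_boot.

Lemma claimTS (n : nat) (I : interp_system n) (S T : indexical I) (p : Atom I) :
  valid_subset S T ->
  forall k r m, @runs _ I r -> iter k (EB T) (atom p) r m -> iter k (EB S) (atom p) r m.
Proof.
  move=> HST; elim=> [|k IH] r m Hr //= H j Hj r' m' Hr' Hind Hj'.
  apply: IH => //. apply: (H j (HST _ _ Hr _ Hj) r' m' Hr' Hind).
  exact: (HST _ _ Hr' _ Hj').
Qed.

Lemma claimST (n : nat) (I : interp_system n) (Props : Atom I -> Prop)
  (S T : indexical I) (bis : run I -> nat -> run I -> nat -> Prop) (p : Atom I) :
  sync_epi_bisim Props bis ->
  (forall r m, @runs _ I r ->
     exists r', @runs _ I r' /\ bis r m r' m /\ (forall i, S r' m i <-> T r m i)) ->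
  Props p ->
  forall k x x' m, @runs _ I x -> @runs _ I x' -> bis x m x' m ->
    (forall i, S x' m i <-> T x m i) ->
    iter k (EB S) (atom p) x' m -> iter k (EB T) (atom p) x m.
Proof.
  move=> Hbis Hex Hp; elim=> [|k IH] x x' m Hx Hx' Hb HS /=.
  - case: (Hbis _ _ _ _ Hx Hx' Hb) => _ Hpi _. by move=> /(proj2 (Hpi p Hp)).
  - move=> H j Hj y m' Hy Hind Hj'.
    case: (Hex y m' Hy) => [y' [Hy' [Hb' HS']]].
    apply: (IH y y' m' Hy Hy' Hb' HS').
    apply: (H j (proj2 (HS j) Hj) y' m' Hy').
    + case: (Hbis _ _ _ _ Hx Hx' Hb) => _ _ Hl.
      case: (Hbis _ _ _ _ Hy Hy' Hb') => _ _ Hl'.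
      rewrite /indist in Hind Hl Hl' *. by rewrite -(Hl j) Hind (Hl' j).
    + exact: (proj2 (HS' j) Hj').
Qed.

Arguments claimTS {n I S T p}.
Arguments claimST {n I Props S T bis p}.

Theorem proposition10 (n : nat) (I : interp_system n) (Props : Atom I -> Prop)
  (S T : indexical I) (bis : run I -> nat -> run I -> nat -> Prop) :
  sync_epi_bisim Props bis ->
  valid_subset S T ->
  (forall r m, @runs _ I r ->
     exists r', @runs _ I r' /\ bis r m r' m /\ (forall i, S r' m i <-> T r m i)) ->
  forall (p : Atom I) (i : 'I_n), Props p ->
    valid (iff_f (B S i (CB S (atom p))) (B T i (CB T (atom p)))).
Proof.
  move=> Hbis HST Hex p i Hp r m Hr; split.
  - move=> H r'' m'' Hr'' Hind Hi k Hk.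
    case: (Hex r'' m'' Hr'') => [y' [Hy' [Hb' HS']]].
    apply: (claimST Hbis Hex Hp k r'' y' m'' Hr'' Hy' Hb' HS').
    apply: (H y' m'' Hy') => //.
    + case: (Hbis _ _ _ _ Hr'' Hy' Hb') => _ _ Hl.
      rewrite /indist in Hind Hl *. by rewrite Hind (Hl i).
    + exact: (proj2 (HS' i) Hi).
  - move=> H r'' m'' Hr'' Hind Hi k Hk.
    apply: (claimTS HST) => //.
    exact: (H r'' m'' Hr'' Hind (HST _ _ Hr'' _ Hi)).
Qed.
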